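(* Let $(\mathcal{X},\rho)$ be a length space and $\eta:\mathcal{X}\to\mathcal{Y}$ a function. Then for all $r>0$, $V_r^c=(\partial_\eta\mathcal{X})^r$, where $V_r=\{x\in\mathcal{X}:\mathrm{margin}_\eta(x)\ge r\}$.
   Context: A length space: $\rho(x,x')=\inf_\gamma\ell(\gamma)$ over continuous paths from $x$ to $x'$. $\mathrm{margin}_\eta(x)=\inf\{\rho(x,x'):\eta(x')\ne\eta(x)\}$, $\partial_\eta\mathcal{X}=\{x:\mathrm{margin}_\eta(x)=0\}$, and for $A\subset\mathcal{X}$, $A^r=\bigcup_{x\in A}B(x,r)$ with $B(x,r)$ the open ball. *)

(* Defs.v *)
From mathcomp Require Import all_boot all_order all_algebra.
From mathcomp Require Import all_classical all_reals ereal.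
Set Implicit Arguments. Unset Strict Implicit. Unset Printing Implicit Defensive.
Import Order.TTheory GRing.Theory Num.Theory.
Local Open Scope classical_set_scope.
Local Open Scope ring_scope.

Definition is_metric (R : realType) (X : Type) (rho : X -> X -> R) : Prop :=
  [/\ forall x, rho x x = 0,
      forall x y, rho x y = 0 -> x = y,
      forall x y, rho x y = rho y x &
      forall x y z, rho x z <= rho x y + rho y z].

Definition path_continuous (R : realType) (X : Type) (rho : X -> X -> R)
    (gamma : R -> X) : Prop :=
  forall t, 0 <= t <= 1 -> forall e, 0 < e -> exists2 d, 0 < d &
    forall s, 0 <= s <= 1 -> `|s - t| < d -> rho (gamma s) (gamma t) < e.

Definition partition01 (R : realType) (n : nat) (t : nat -> R) : Prop :=
  [/\ t 0%N = 0, t n = 1 & forall i, (i < n)%N -> t i <= t i.+1].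

Definition path_length (R : realType) (X : Type) (rho : X -> X -> R)
    (gamma : R -> X) : \bar R :=
  ereal_sup [set l : \bar R | exists n t, partition01 n t /\
     l = ((\sum_(i < n) rho (gamma (t i)) (gamma (t i.+1)))%:E)%E].

Definition length_space (R : realType) (X : Type) (rho : X -> X -> R) : Prop :=
  is_metric rho /\
  forall x x', ((rho x x')%:E)%E = ereal_inf [set l : \bar R | exists gamma : R -> X,
      [/\ path_continuous rho gamma, gamma 0 = x, gamma 1 = x' &
          l = path_length rho gamma]].

(* margin_eta(x) = inf { rho(x,x') : eta x' <> eta x } (= +oo if eta constant) *)
Definition margin (R : realType) (X Y : Type) (rho : X -> X -> R) (eta : X -> Y)
    (x : X) : \bar R :=
  ereal_inf [set l : \bar R | exists2 x', eta x' <> eta x & l = ((rho x x')%:E)%E].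

Definition boundary (R : realType) (X Y : Type) (rho : X -> X -> R) (eta : X -> Y)
    : set X := [set x | margin rho eta x = 0%E].

Definition oball (R : realType) (X : Type) (rho : X -> X -> R) (x : X) (r : R)
    : set X := [set x' | rho x x' < r].

Definition enlarge (R : realType) (X : Type) (rho : X -> X -> R) (A : set X) (r : R)
    : set X := \bigcup_(x in A) oball rho x r.

Definition Vr (R : realType) (X Y : Type) (rho : X -> X -> R) (eta : X -> Y) (r : R)
    : set X := [set x | (r%:E <= margin rho eta x)%E].

(* Main.v *)
Require Import Defs.
From mathcomp Require Import all_boot all_order all_algebra.
From mathcomp Require Import all_classical all_reals ereal.
From mathcomp Require Import lra.
Import Order.TTheory GRing.Theory Num.Theory.
Local Open Scope classical_set_scope.
Local Open Scope ring_scope.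

Lemma metric_ge0 (R : realType) (X : Type) (rho : X -> X -> R) :
  is_metric rho -> forall x y, 0 <= rho x y.
Proof.
case=> h0 _ hs ht x y.
have := ht x y x; rewrite h0 (hs y x) => H.
have : 0 <= rho x y + rho x y by [].
by move: H => _ ; have := ht x y x; rewrite h0 hs; lra.
Qed.

Arguments metric_ge0 {R X rho}.
Lemma margin0 (R : realType) (X Y : Type) (rho : X -> X -> R) (eta : X -> Y) b :
  is_metric rho ->
  (forall e, 0 < e -> exists2 x', eta x' <> eta b & rho b x' < e) ->
  margin rho eta b = 0%E.
Proof.
move=> hm happ; have hge := metric_ge0 hm.
have H0 : (0 <= margin rho eta b)%E.
  by apply: le_ereal_inf_tmp => l [x' _ ->]; rewrite lee_fin.
have He : forall e, 0 < e -> (margin rho eta b <= e%:E)%E.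
  move=> e he; have [x' hx' hlt] := happ e he.
  have H1 : (margin rho eta b <= (rho b x')%:E)%E.
    by apply: ereal_inf_lbound; exists x'.
  by apply: le_trans H1 _; rewrite lee_fin ltW.
apply/eqP; rewrite eq_le H0 andbT.
move: H0 He; case: (margin rho eta b) => [m| |] //.
- move=> _ He; rewrite lee_fin; apply/ler_addgt0Pr => e he.
  by rewrite add0r -lee_fin; apply: He.
- by move=> _ He; have := He 1 ltr01.
Qed.

Theorem lemma13 (R : realType) (X Y : Type) (rho : X -> X -> R)
  (hlen : length_space rho) (eta : X -> Y) (r : R) :
  0 < r -> ~` Vr rho eta r = enlarge rho (boundary rho eta) r.
Proof.
move=> r0; case: hlen => hm hpath.
have hge := metric_ge0 hm.
have [h0 hsep hs ht] := hm.
apply/seteqP; split => x /=.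
- rewrite /Vr /= => /negP; rewrite -ltNge => /ereal_inf_lt [l [x' hx' ->]].
  rewrite lte_fin => hxx'.
  have : ((rho x x')%:E < r%:E)%E by rewrite lte_fin.
  rewrite hpath => /ereal_inf_lt [L [g [gc g0 g1 hLe]] hL]; rewrite {}hLe in hL.
  pose A := [set t : R | 0 <= t <= 1 /\ eta (g t) <> eta x].
  have A1 : A 1 by split; [rewrite ler01 lexx | rewrite g1].
  have Alb : has_lbound A by exists 0 => t [/andP[]].
  have Ainf : has_inf A by split; [exists 1 |].
  set ts := inf A.
  have ts0 : 0 <= ts by apply: lb_le_inf; [exists 1 | move=> t [/andP[]]].
  have ts1 : ts <= 1 by apply: ge_inf.
  have tsb : 0 <= ts <= 1 by rewrite ts0 ts1.
  exists (g ts).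
    apply: margin0 => // e he.
    have [d d0 hd] := gc ts tsb e he.
    have [Hn|He] := pselect (eta (g ts) = eta x).
    + have [s [/andP[s0 s1] hsA] hsd] := inf_adherent d0 Ainf.
      exists (g s); first by rewrite Hn.
      rewrite hs; apply: hd; first by rewrite s0 s1.
      have : ts <= s by apply: (ge_inf Alb); split => //; rewrite s0 s1.
      rewrite -/ts in hsd.
      by move=> hts; rewrite ger0_norm; [lra | lra].
    + have tsp : 0 < ts.
        rewrite lt_neqAle ts0 andbT; apply/eqP => ht0.
        by apply: He; rewrite -ht0 g0.
      pose s := Num.max 0 (ts - d / 2).
      have s0 : 0 <= s by rewrite le_max lexx.
      have sts : s < ts by rewrite gt_max tsp /=; lra.
      have sd : ts - d < s by rewrite lt_max; apply/orP; right; lra.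
      have sb : 0 <= s <= 1 by rewrite s0 /=; lra.
      have nA : ~ A s.
        by move=> hA; have := ge_inf Alb hA; rewrite -/ts; lra.
      exists (g s).
        move=> hee; apply: nA; split => //; by move=> h; apply: He; rewrite -h.
      rewrite hs; apply: hd => //.
      by rewrite ltr0_norm; lra.
  rewrite /oball /=.
  pose t := fun i : nat => if i == 0%N then 0 else if i == 1%N then ts else (1 : R).
  have hp : partition01 2 t.
    split => //; case=> [|[|]] //= _; rewrite /t /=; lra.
  have Hle : (((\sum_(i < 2) rho (g (t i)) (g (t i.+1)))%:E) <= path_length rho g)%E.
    by apply: ereal_sup_ubound; exists 2%N, t.
  have := le_lt_trans Hle hL.
  rewrite !big_ord_recr big_ord0 /= add0r /t /= g0 lte_fin.
  have := hge (g ts) (g 1).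
  move=> H1 H2; rewrite hs; lra.
- case=> b hb hbx; rewrite /oball /= in hbx; rewrite /Vr /= => hv.
  have hb0 : margin rho eta b = 0%E by [].
  have [Hn|He] := pselect (eta x = eta b).
  + have : (margin rho eta b < (r - rho b x)%:E)%E by rewrite hb0 lte_fin; lra.
    case/ereal_inf_lt => l [x' hx' ->]; rewrite lte_fin => hlt.
    have : (margin rho eta x <= (rho x x')%:E)%E.
      by apply: ereal_inf_lbound; exists x' => //; rewrite Hn.
    move=> H; have := le_trans hv H; rewrite lee_fin.
    have := ht x b x'; rewrite (hs x b) => Q1 Q2; clear -Q1 Q2 hlt; lra.
  + have : (margin rho eta x <= (rho x b)%:E)%E.
      by apply: ereal_inf_lbound; exists b => //; move=> h; apply: He; rewrite h.
    move=> H; have := le_trans hv H; rewrite lee_fin (hs x b) => Q; clear -Q hbx; lra.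
Qed.
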